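(* For $K\ge0$ define $g_0,g_1:[0,1]\to\mathbb{R}$ by $$g_0(u)=\begin{cases}0,&u\in[0,\frac12],\\ (u-\frac12)(1-u)(u-\frac23),&u\in(\frac12,1],\end{cases}\qquad g_1(u)=\begin{cases}0,&u\in[0,\frac1{11}]\cup[\frac12,\frac23],\\ K\operatorname{dist}(u,\{\frac1{11},\frac12\}),&u\in(\frac1{11},\frac12),\\ (u-\frac12)(1-u)(u-\frac23),&u\in(\frac23,1].\end{cases}$$ There are $M>0$ and $a\in(0,\frac1{16})$ (independent of $K$) such that the following hold for solutions $u$ with values in $[0,1]$: (i) If $u_t=u_{xx}+g_0(u)$ on $(0,1)\times\mathbb{R}$ and $u(0,\cdot)\le\chi_{(-\infty,0]}+\frac58\chi_{(0,\infty)}$, then $u(1,\cdot)\le\chi_{(-\infty,M]}+(\frac58-2a)\chi_{(M,\infty)}$. (ii) For all $K\ge0$: if $u_t=u_{xx}+g_1(u)$ on $(1,4)\times\mathbb{R}$ and $u(1,\cdot)\le\chi_{(-\infty,M]}+(\frac58-2a)\chi_{(M,\infty)}$, then $u(4,\cdot)\le\chi_{(-\infty,2M]}+(\frac58-a)\chi_{(2M,\infty)}$. (iii) If $u_t=u_{xx}+g_0(u)$ on $(-1,2)\times\mathbb{R}$ and $u(-1,\cdot)\ge\frac4{11}\chi_{(-M,M)}$, then $\min\{u(0,\cdot),u(2,\cdot)\}\ge\frac3{11}\chi_{(-1,1)}$. (iv) For all large enough $K$: if $u_t=u_{xx}+g_1(u)$ on $(2,3)\times\mathbb{R}$ and $u(2,\cdot)\ge\frac2{11}\chi_{(-1,1)}$,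 then $u(3,\cdot)\ge\frac5{11}\chi_{(-4M,4M)}$.
   Context: $\chi_A$ denotes the indicator function of the set $A$. Solutions are classical solutions of the stated semilinear heat equations taking values in $[0,1]$ (the domain of $g_0,g_1$). *)

(* Defs.v *)
From Stdlib Require Import Reals Lra ClassicalDescription.
From Coquelicot Require Import Coquelicot.
Open Scope R_scope.

Definition chi (A : R -> Prop) (x : R) : R :=
  if excluded_middle_informative (A x) then 1 else 0.

(* The nonlinearity g0 (formula on [0,1]; extended to R by the same
   piecewise formula, irrelevant for [0,1]-valued solutions). *)
Definition g0 (v : R) : R :=
  if Rle_dec v (1/2) then 0 else (v - 1/2) * (1 - v) * (v - 2/3).

(* The nonlinearity g1 with parameter K; for v in (1/11,1/2),
   dist(v,{1/11,1/2}) = min (v - 1/11) (1/2 - v). *)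
Definition g1 (K : R) (v : R) : R :=
  if Rle_dec v (1/11) then 0
  else if Rlt_dec v (1/2) then K * Rmin (Rabs (v - 1/11)) (Rabs (v - 1/2))
  else if Rle_dec v (2/3) then 0
  else (v - 1/2) * (1 - v) * (v - 2/3).

Definition heat_sol (g : R -> R) (t0 t1 : R) (u : R -> R -> R) : Prop :=
  (forall t x, t0 <= t <= t1 -> 0 <= u t x <= 1) /\
  (forall t x, t0 <= t <= t1 ->
     filterlim (fun p : R * R => u (fst p) (snd p))
       (within (fun p : R * R => t0 <= fst p <= t1) (locally (t, x)))
       (locally (u t x))) /\
  (forall t x, t0 < t < t1 ->
     ex_derive (fun s => u s x) t /\
     ex_derive (fun y => u t y) x /\
     ex_derive (fun y => Derive (fun z => u t z) y) x /\
     continuous (fun p : R * R => Derive (fun s => u s (snd p)) (fst p)) (t, x) /\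
     continuous (fun p : R * R => Derive_n (fun y => u (fst p) y) 2 (snd p)) (t, x) /\
     Derive (fun s => u s x) t = Derive_n (fun y => u t y) 2 x + g (u t x)).

(* Main.v *)
Require Import Defs.
From Stdlib Require Import Reals Lra.
From Stdlib Require Import ClassicalDescription IndefiniteDescription.
From Coquelicot Require Import Coquelicot.
Open Scope R_scope.

Lemma ballR (x e y : R) : ball x e y <-> Rabs (y - x) < e.
Proof. unfold ball; simpl; unfold AbsRing_ball, abs, minus, plus, opp; simpl. tauto. Qed.
Lemma ballP (x y e: R) (p : R*R) : ball (x,y) e p <-> Rabs (fst p - x) < e /\ Rabs (snd p - y) < e.
Proof. destruct p. unfold ball; simpl. unfold prod_ball. simpl. rewrite <- !ballR. unfold ball. simpl. tauto. Qed.

Definition jcont (z : R -> R -> R) (t0 T a b : R) : Prop :=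
 forall t x, t0 <= t <= T -> a <= x <= b -> forall eps, 0 < eps -> exists del, 0 < del /\
   forall s y, t0 <= s <= T -> Rabs (s - t) < del -> a <= y <= b -> Rabs (y - x) < del ->
   Rabs (z s y - z t x) < eps.

Lemma cont_eps (h : R -> R) s : continuous h s -> forall eps, 0 < eps ->
  exists del, 0 < del /\ forall t, Rabs (t - s) < del -> Rabs (h t - h s) < eps.
Proof.
  intros Hc eps He. destruct (proj1 (filterlim_locally h (h s)) Hc (mkposreal eps He)) as [d Hd].
  exists d. split. apply cond_pos. intros t Ht. apply (proj1 (ballR _ _ _)). apply Hd. apply ballR. exact Ht.
Qed.

Lemma jcont_sub_h z h t0 T a b : jcont z t0 T a b -> (forall s, continuous h s) ->
  jcont (fun t x => z t x - h t) t0 T a b.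
Proof.
  intros Hz Hh t x Ht Hx eps He.
  destruct (Hz t x Ht Hx (eps/2)) as [d1 [Hd1 P1]]. lra.
  destruct (cont_eps h t (Hh t) (eps/2)) as [d2 [Hd2 P2]]. lra.
  exists (Rmin d1 d2). split. apply Rmin_glb_lt; lra.
  intros s y Hs Hst Hy Hyx.
  assert (A1 := P1 s y Hs (Rlt_le_trans _ _ _ Hst (Rmin_l _ _)) Hy (Rlt_le_trans _ _ _ Hyx (Rmin_l _ _))).
  assert (A2 := P2 s (Rlt_le_trans _ _ _ Hst (Rmin_r _ _))).
  replace (z s y - h s - (z t x - h t)) with ((z s y - z t x) - (h s - h t)) by ring.
  eapply Rle_lt_trans. apply Rabs_triang_inv2 || apply Rabs_triang. 
  rewrite Rabs_Ropp. lra.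
Qed.

Lemma unif q t0 T a b s : jcont q t0 T a b -> a <= b -> t0 <= s <= T ->
  (forall x, a <= x <= b -> q s x < 0) ->
  exists d, 0 < d /\ forall t, t0 <= t <= T -> Rabs (t - s) < d -> forall x, a <= x <= b -> q t x < 0.
Proof.
  intros Hq Hab Hs Hneg.
  assert (Ex : forall x, exists d : posreal, a <= x <= b -> forall t y, t0 <= t <= T ->
     Rabs (t - s) < d -> a <= y <= b -> Rabs (y - x) < d -> q t y < q s x / 2).
  { intros x. destruct (Rle_dec a x) as [h1|h1]; [destruct (Rle_dec x b) as [h2|h2]|].
    - destruct (Hq s x Hs (conj h1 h2) (- q s x / 2)) as [d [Hd P]].
      { assert (q s x < 0) by (apply Hneg; lra). lra. }
      exists (mkposreal d Hd). intros _ t y Ht Hts Hy Hyx. simpl in *.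
      specialize (P t y Ht Hts Hy Hyx). apply Rabs_def2 in P. lra.
    - exists (mkposreal 1 Rlt_0_1). intros; lra.
    - exists (mkposreal 1 Rlt_0_1). intros; lra. }
  set (delta := fun x => proj1_sig (constructive_indefinite_description _ (Ex x))).
  assert (Hdelta : forall x, a <= x <= b -> forall t y, t0 <= t <= T ->
     Rabs (t - s) < delta x -> a <= y <= b -> Rabs (y - x) < delta x -> q t y < q s x / 2).
  { intros x. unfold delta. destruct (constructive_indefinite_description _ (Ex x)) as [d Hd]. exact Hd. }
  destruct (compactness_value_1d a b delta) as [d Hd].
  exists d. split. apply cond_pos. intros t Ht Hts y Hy.
  apply Rnot_le_lt. intro Hc. apply (Hd y Hy). intros [x0 [Hx0 [H1 H2]]].
  assert (q t y < q s x0 / 2).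
  { apply (Hdelta x0 Hx0 t y Ht). lra. exact Hy. exact H1. }
  assert (q s x0 < 0) by (apply Hneg; exact Hx0). lra.
Qed.

Lemma left_max (f : R -> R) x del : ex_derive f x -> 0 < del ->
  (forall y, x - del < y < x -> f y <= f x) -> 0 <= Derive f x.
Proof.
  intros Hd Hdel Hm. apply Rnot_lt_le. intro Hl.
  assert (Hi := Derive_correct f x Hd). apply is_derive_Reals in Hi.
  destruct (Hi (- Derive f x / 2)) as [d Hd2]. lra.
  set (h := - Rmin del d / 2).
  assert (Hh1 : h < 0). { unfold h. assert (0 < Rmin del d) by (apply Rmin_glb_lt; [lra|apply cond_pos]). lra. }
  assert (Hh2 : - h < Rmin del d) by (unfold h; assert (0 < Rmin del d) by (apply Rmin_glb_lt; [lra|apply cond_pos]); lra).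
  specialize (Hd2 h (Rlt_not_eq _ _ Hh1)).
  assert (Rabs h < d). { rewrite Rabs_left by lra. eapply Rlt_le_trans. exact Hh2. apply Rmin_r. }
  specialize (Hd2 H). 
  assert (Hf : f (x + h) <= f x). { apply Hm. split. assert (-h < del) by (eapply Rlt_le_trans; [exact Hh2| apply Rmin_l]). lra. lra. }
  set (num := f (x + h) - f x) in *. assert (Hnum : num <= 0) by (unfold num; lra). clearbody num.
  assert (E : num = (num / h) * h) by (field; lra).
  assert (0 <= num / h). { destruct (Rle_or_lt 0 (num / h)) as [Q|Q]; [exact Q|]. assert (0 < (num/h) * h) by (replace ((num/h)*h) with ((-(num/h))*(-h)) by ring; apply Rmult_lt_0_compat; lra). lra. }
  apply Rabs_def2 in Hd2. lra.
Qed.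

Lemma right_max (f : R -> R) x del : ex_derive f x -> 0 < del ->
  (forall y, x < y < x + del -> f y <= f x) -> Derive f x <= 0.
Proof.
  intros Hd Hdel Hm. apply Rnot_lt_le. intro Hl.
  assert (Hi := Derive_correct f x Hd). apply is_derive_Reals in Hi.
  destruct (Hi (Derive f x / 2)) as [d Hd2]. lra.
  assert (Hmin : 0 < Rmin del d) by (apply Rmin_glb_lt; [lra|apply cond_pos]).
  set (h := Rmin del d / 2).
  assert (Hh1 : 0 < h) by (unfold h; lra).
  specialize (Hd2 h (Rgt_not_eq _ _ Hh1)).
  assert (Rabs h < d). { rewrite Rabs_right by lra. unfold h. assert (Rmin del d <= d) by apply Rmin_r. lra. }
  specialize (Hd2 H).
  assert (Hf : f (x + h) <= f x). { apply Hm. split. lra. assert (Rmin del d <= del) by apply Rmin_l. unfold h in *. lra. }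
  set (num := f (x + h) - f x) in *. assert (Hnum : num <= 0) by (unfold num; lra). clearbody num.
  assert (E : num = (num / h) * h) by (field; lra).
  assert (num / h <= 0). { destruct (Rle_or_lt (num / h) 0) as [Q|Q]; [exact Q|]. assert (0 < (num/h) * h) by (apply Rmult_lt_0_compat; lra). lra. }
  apply Rabs_def2 in Hd2. lra.
Qed.

Lemma cont_of_ex (f : R -> R) x : ex_derive f x -> continuity_pt f x.
Proof. intro H. apply continuity_pt_filterlim. apply (ex_derive_continuous f x H). Qed.

Lemma second_max (f : R -> R) x del : 0 < del ->
  (forall y, x - del < y < x + del -> ex_derive f y) -> ex_derive (Derive f) x ->
  (forall y, x - del < y < x + del -> f y <= f x) -> Derive (Derive f) x <= 0.
Proof.
  intros Hdel Hex Hex2 Hm.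
  assert (D0 : Derive f x = 0).
  { apply Rle_antisym.
    - apply (right_max f x del). apply Hex; lra. lra. intros; apply Hm; lra.
    - apply (left_max f x del). apply Hex; lra. lra. intros; apply Hm; lra. }
  apply Rnot_lt_le. intro Hl.
  assert (Hi := Derive_correct _ x Hex2). apply is_derive_Reals in Hi.
  destruct (Hi (Derive (Derive f) x / 2)) as [d Hd2]. lra.
  assert (Hmin : 0 < Rmin del d) by (apply Rmin_glb_lt; [lra|apply cond_pos]).
  set (h := Rmin del d / 2).
  assert (Hh1 : 0 < h) by (unfold h; lra).
  assert (Hhd : h < d) by (unfold h; assert (Rmin del d <= d) by apply Rmin_r; lra).
  assert (Hhdel : h < del) by (unfold h; assert (Rmin del d <= del) by apply Rmin_l; lra).
  assert (Pos : forall c, x < c <= x + h -> 0 < Derive f c).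
  { intros c Hc. specialize (Hd2 (c - x)). 
    assert (c - x <> 0) by lra. assert (Rabs (c - x) < d) by (rewrite Rabs_right; lra).
    specialize (Hd2 H H0). replace (x + (c - x)) with c in Hd2 by ring. rewrite D0 in Hd2.
    apply Rabs_def2 in Hd2. 
    assert (E : Derive f c = (Derive f c - 0) / (c - x) * (c - x)) by (field; lra). nra. }
  assert (Nn : forall c, x <= c <= x + h -> 0 <= Derive f c).
  { intros c Hc. destruct (Req_dec c x). subst; lra. left; apply Pos; lra. }
  assert (MV : forall p r, x <= p -> p < r -> r <= x + h -> exists c, p <= c <= r /\ f r - f p = Derive f c * (r - p)).
  { intros p r Hp Hpr Hr.
    destruct (MVT_gen f p r (Derive f)) as [c [Hc Hc2]].
    - intros y Hy. rewrite Rmin_left in Hy by lra. rewrite Rmax_right in Hy by lra.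
      apply Derive_correct. apply Hex. lra.
    - intros y Hy. rewrite Rmin_left in Hy by lra. rewrite Rmax_right in Hy by lra.
      apply cont_of_ex. apply Hex. lra.
    - rewrite Rmin_left in Hc by lra. rewrite Rmax_right in Hc by lra. exists c. split; assumption. }
  destruct (MV x (x + h/2)) as [c1 [Hc1 E1]]; try lra.
  destruct (MV (x + h/2) (x + h)) as [c2 [Hc2 E2]]; try lra.
  assert (0 <= Derive f c1) by (apply Nn; lra).
  assert (0 < Derive f c2) by (apply Pos; lra).
  assert (f (x + h) <= f x) by (apply Hm; lra). nra.
Qed.

Lemma maxp (z : R -> R -> R) (t0 T a b L : R) :
  t0 < T -> a < b -> 0 <= L ->
  jcont z t0 T a b ->
  (forall t y, t0 < t < T -> a < y < b ->
     ex_derive (fun s => z s y) t /\ ex_derive (fun y => z t y) y /\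
     ex_derive (fun y => Derive (fun y => z t y) y) y) ->
  (forall t x, t0 < t < T -> a < x < b -> 0 < z t x ->
     Derive (fun s => z s x) t - Derive (fun y => Derive (fun y => z t y) y) x <= L * z t x) ->
  (forall x, a <= x <= b -> z t0 x <= 0) ->
  (forall t, t0 <= t <= T -> z t a <= 0 /\ z t b <= 0) ->
  forall t x, t0 <= t <= T -> a <= x <= b -> z t x <= 0.
Proof.
  intros Ht0T Hab HL Hc Hd Heq Hinit Hbd t1 x1 Ht1 Hx1.
  apply Rnot_lt_le. intro Hpos.
  assert (Ex2 : exists t2, t0 < t2 < T /\ 0 < z t2 x1).
  { destruct (Req_dec t1 T) as [E|E].
    - subst t1. destruct (Hc T x1 Ht1 Hx1 (z T x1 / 2)) as [d [Hd0 P]]. lra.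
      set (s := T - Rmin d (T - t0) / 2).
      assert (0 < Rmin d (T - t0)) by (apply Rmin_glb_lt; lra).
      assert (Rmin d (T - t0) <= d) by apply Rmin_l. assert (Rmin d (T - t0) <= T - t0) by apply Rmin_r.
      exists s. assert (t0 < s < T) by (unfold s; lra). split. exact H2.
      assert (Q := P s x1 ltac:(lra) ltac:(rewrite Rabs_left; unfold s; lra) Hx1 ltac:(rewrite Rminus_eq_0, Rabs_R0; lra)).
      apply Rabs_def2 in Q. lra.
    - exists t1. split; [|exact Hpos]. split.
      + destruct (Req_dec t1 t0). subst. specialize (Hinit x1 Hx1). lra. lra.
      + lra. }
  destruct Ex2 as [t2 [Ht2 Hz2]].
  assert (Hx1' : a < x1 < b).
  { split. destruct (Req_dec x1 a). subst. destruct (Hbd t2 ltac:(lra)). lra. lra.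
    destruct (Req_dec x1 b). subst. destruct (Hbd t2 ltac:(lra)). lra. lra. }
  set (e := z t2 x1 / (2 * (1 + (t2 - t0)) * exp (L * (t2 - t0)))).
  assert (He : 0 < e). { unfold e. apply Rdiv_lt_0_compat. lra. apply Rmult_lt_0_compat. lra. apply exp_pos. }
  set (h := fun t => e * (1 + (t - t0)) * exp (L * (t - t0))).
  assert (Hh2 : h t2 < z t2 x1).
  { unfold h, e. field_simplify. 2: split; [apply Rgt_not_eq, exp_pos| lra].
    assert (0 < exp (L * (t2 - t0))) by apply exp_pos. lra. }
  assert (hpos : forall t, t0 <= t -> 0 < h t).
  { intros t Ht. unfold h. apply Rmult_lt_0_compat. apply Rmult_lt_0_compat; lra. apply exp_pos. }
  set (q := fun t x => z t x - h t).
  assert (Hq : jcont q t0 T a b).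
  { apply jcont_sub_h. exact Hc. intro s. apply (ex_derive_continuous h s). unfold h. auto_derive. auto. }
  set (S := fun t => t0 <= t <= t2 /\ exists x, a <= x <= b /\ 0 <= q t x).
  assert (S2 : S t2). { split. lra. exists x1. split. lra. unfold q. lra. }
  destruct (completeness (fun r => S (- r))) as [m [Hub Hlub]].
  { exists (- t0). intros r [Hr _]. lra. }
  { exists (- t2). rewrite Ropp_involutive. exact S2. }
  set (Ts := - m).
  assert (Tlow : forall t, S t -> Ts <= t).
  { intros t St. unfold Ts. assert (- t <= m). apply Hub. rewrite Ropp_involutive. exact St. lra. }
  assert (Tgreat : forall c, (forall t, S t -> c <= t) -> c <= Ts).
  { intros c Hcc. unfold Ts. assert (m <= - c). apply Hlub. intros r Sr. specialize (Hcc _ Sr). lra. lra. }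
  assert (Ts_le : Ts <= t2) by (apply Tlow; exact S2).
  assert (Ts_ge : t0 <= Ts) by (apply Tgreat; intros t [Ht _]; lra).
  assert (Good : forall t, t0 <= t < Ts -> forall x, a <= x <= b -> q t x < 0).
  { intros t Ht x Hx. apply Rnot_le_lt. intro Hq0.
    assert (S t) by (split; [lra| exists x; split; [exact Hx| exact Hq0]]).
    specialize (Tlow t H). lra. }
  assert (Ts_gt : t0 < Ts).
  { destruct (unif q t0 T a b t0 Hq (Rlt_le _ _ Hab) ltac:(lra)) as [d [Hd0 P]].
    { intros x Hx. unfold q. specialize (Hinit x Hx). assert (h t0 > 0) by (apply hpos; lra). lra. }
    assert (t0 + d / 2 <= Ts).
    { apply Tgreat. intros t [Ht [x [Hx Hqx]]]. apply Rnot_lt_le. intro Hlt.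
      assert (q t x < 0). { apply (P t). lra. rewrite Rabs_right; lra. exact Hx. } lra. }
    lra. }
  assert (LeT : forall x, a <= x <= b -> q Ts x <= 0).
  { intros x Hx. apply Rnot_lt_le. intro Hlt.
    destruct (Hq Ts x ltac:(lra) Hx (q Ts x / 2)) as [d [Hd0 P]]. lra.
    set (s := Ts - Rmin d (Ts - t0) / 2).
    assert (0 < Rmin d (Ts - t0)) by (apply Rmin_glb_lt; lra).
    assert (Rmin d (Ts - t0) <= d) by apply Rmin_l. assert (Rmin d (Ts - t0) <= Ts - t0) by apply Rmin_r.
    assert (Q := P s x ltac:(unfold s; lra) ltac:(rewrite Rabs_left; unfold s; lra) Hx ltac:(rewrite Rminus_eq_0, Rabs_R0; lra)).
    apply Rabs_def2 in Q. assert (q s x < 0) by (apply Good; [unfold s; lra| exact Hx]). lra. }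
  assert (Exs : exists xs, a <= xs <= b /\ q Ts xs = 0).
  { apply NNPP. intro Hn.
    assert (Neg : forall x, a <= x <= b -> q Ts x < 0).
    { intros x Hx. destruct (Rle_lt_or_eq_dec _ _ (LeT x Hx)) as [Q|Q]. exact Q. exfalso. apply Hn. exists x. auto. }
    destruct (unif q t0 T a b Ts Hq (Rlt_le _ _ Hab) ltac:(lra) Neg) as [d [Hd0 P]].
    assert (Ts + d / 2 <= Ts).
    { apply Tgreat. intros t [Ht [x [Hx Hqx]]]. apply Rnot_lt_le. intro Hlt.
      destruct (Rlt_le_dec t Ts) as [Q|Q].
      - assert (q t x < 0) by (apply Good; [lra|exact Hx]). lra.
      - assert (q t x < 0). { apply (P t). lra. rewrite Rabs_right; lra. exact Hx. } lra. }
    lra. }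
  destruct Exs as [xs [Hxs Hqs]].
  assert (hTs := hpos Ts ltac:(lra)).
  assert (Hxs' : a < xs < b).
  { destruct (Hbd Ts ltac:(lra)) as [Ba Bb]. unfold q in Hqs.
    split; [destruct (Req_dec xs a) | destruct (Req_dec xs b)]; try (subst; lra); lra. }
  assert (zTs : z Ts xs = h Ts) by (unfold q in Hqs; lra).
  destruct (Hd Ts xs ltac:(lra) Hxs') as [Dt [Dx Dxx]].
  assert (D2 : Derive (fun y => Derive (fun y => z Ts y) y) xs <= 0).
  { set (del := Rmin (xs - a) (b - xs)).
    assert (0 < del) by (apply Rmin_glb_lt; lra).
    assert (del <= xs - a) by apply Rmin_l. assert (del <= b - xs) by apply Rmin_r.
    apply (second_max (fun y => z Ts y) xs del). lra.
    - intros y Hy. apply (Hd Ts y ltac:(lra) ltac:(lra)).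
    - exact Dxx.
    - intros y Hy. assert (q Ts y <= 0) by (apply LeT; lra). unfold q in H2. lra. }
  set (psi := fun t => exp (- L * (t - t0)) * z t xs - e * (1 + (t - t0))).
  assert (Psi_ex : ex_derive psi Ts) by (unfold psi; auto_derive; exact Dt).
  assert (Psi_D : Derive psi Ts = exp (- L * (Ts - t0)) * (Derive (fun s => z s xs) Ts - L * z Ts xs) - e).
  { apply is_derive_unique. unfold psi. auto_derive. exact Dt. unfold Rminus. ring. }
  assert (Psi_pos : 0 <= Derive psi Ts).
  { apply (left_max psi Ts (Ts - t0)). exact Psi_ex. lra.
    intros y Hy. assert (q y xs < 0) by (apply Good; [lra|lra]).
    assert (psi Ts = 0).
    { unfold psi. rewrite zTs. unfold h. rewrite Rmult_comm, Rmult_assoc, <- exp_plus.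
      replace (L * (Ts - t0) + - L * (Ts - t0)) with 0 by ring. rewrite exp_0. ring. }
    rewrite H0. unfold psi. unfold q, h in H.
    assert (0 < exp (- L * (y - t0))) by apply exp_pos.
    assert (E1 : exp (- L * (y - t0)) * exp (L * (y - t0)) = 1).
    { rewrite <- exp_plus. replace (- L * (y - t0) + L * (y - t0)) with 0 by ring. apply exp_0. }
    assert (exp (- L * (y - t0)) * z y xs < exp (- L * (y - t0)) * (e * (1 + (y - t0)) * exp (L * (y - t0)))).
    { apply Rmult_lt_compat_l; lra. }
    replace (exp (- L * (y - t0)) * (e * (1 + (y - t0)) * exp (L * (y - t0)))) with (e * (1 + (y - t0)) * (exp (- L * (y - t0)) * exp (L * (y - t0)))) in H2 by ring.
    rewrite E1 in H2. lra. }
  rewrite Psi_D in Psi_pos.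
  assert (0 < exp (- L * (Ts - t0))) by apply exp_pos.
  assert (Hzt : 0 < Derive (fun s => z s xs) Ts - L * z Ts xs).
  { apply Rnot_le_lt. intro Q. assert (exp (- L * (Ts - t0)) * (Derive (fun s => z s xs) Ts - L * z Ts xs) <= 0).
    { rewrite <- (Rmult_0_r (exp (- L * (Ts - t0)))); apply Rmult_le_compat_l; lra. } lra. }
  assert (0 < z Ts xs) by lra.
  specialize (Heq Ts xs ltac:(lra) Hxs' H0). lra.
Qed.

Lemma heat_jcont g t0 t1 u a b : heat_sol g t0 t1 u -> jcont u t0 t1 a b.
Proof.
  intros [_ [Hc _]] t x Ht Hx eps He.
  specialize (Hc t x Ht). apply filterlim_locally with (eps := mkposreal eps He) in Hc.
  destruct Hc as [d Hd]. exists d. split. apply cond_pos.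
  intros s y Hs Hst Hy Hyx. 
  specialize (Hd (s, y) (proj2 (ballP t x d (s, y)) (conj Hst Hyx)) Hs). apply ballR in Hd. exact Hd.
Qed.

Lemma cont_jcont (v : R -> R -> R) t0 T a b :
  (forall t x, continuous (fun p : R * R => v (fst p) (snd p)) (t, x)) -> jcont v t0 T a b.
Proof.
  intros Hc t x Ht Hx eps He.
  specialize (Hc t x). apply filterlim_locally with (eps := mkposreal eps He) in Hc.
  destruct Hc as [d Hd]. exists d. split. apply cond_pos.
  intros s y Hs Hst Hy Hyx.
  specialize (Hd (s, y) (proj2 (ballP t x d (s, y)) (conj Hst Hyx))). apply ballR in Hd. exact Hd.
Qed.

Lemma jcont_sub p q t0 T a b : jcont p t0 T a b -> jcont q t0 T a b ->
  jcont (fun t x => p t x - q t x) t0 T a b.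
Proof.
  intros Hp Hq t x Ht Hx eps He.
  destruct (Hp t x Ht Hx (eps/2)) as [d1 [Hd1 P1]]. lra.
  destruct (Hq t x Ht Hx (eps/2)) as [d2 [Hd2 P2]]. lra.
  exists (Rmin d1 d2). split. apply Rmin_glb_lt; lra.
  intros s y Hs Hst Hy Hyx.
  assert (A1 := P1 s y Hs (Rlt_le_trans _ _ _ Hst (Rmin_l _ _)) Hy (Rlt_le_trans _ _ _ Hyx (Rmin_l _ _))).
  assert (A2 := P2 s y Hs (Rlt_le_trans _ _ _ Hst (Rmin_r _ _)) Hy (Rlt_le_trans _ _ _ Hyx (Rmin_r _ _))).
  apply Rabs_def2 in A1. apply Rabs_def2 in A2. apply Rabs_def1; lra.
Qed.

Lemma dsub (p q : R -> R -> R) t x :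
  ex_derive (fun s => p s x) t -> ex_derive (fun s => q s x) t ->
  (forall y, ex_derive (fun y => p t y) y) -> (forall y, ex_derive (fun y => q t y) y) ->
  ex_derive (fun y => Derive (fun y => p t y) y) x -> ex_derive (fun y => Derive (fun y => q t y) y) x ->
  ex_derive (fun s => p s x - q s x) t /\ ex_derive (fun y => p t y - q t y) x /\
  ex_derive (fun y => Derive (fun y => p t y - q t y) y) x /\
  Derive (fun s => p s x - q s x) t = Derive (fun s => p s x) t - Derive (fun s => q s x) t /\
  Derive (fun y => Derive (fun y => p t y - q t y) y) x =
    Derive (fun y => Derive (fun y => p t y) y) x - Derive (fun y => Derive (fun y => q t y) y) x.
Proof.
  intros H1 H2 H3 H4 H5 H6.
  assert (E : forall y, Derive (fun y => p t y - q t y) y = Derive (fun y => p t y) y - Derive (fun y => q t y) y).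
  { intro y. apply Derive_minus; auto. }
  split. auto_derive; auto.
  split. auto_derive; auto.
  split. eapply ex_derive_ext. intro y. symmetry. apply E. auto_derive; auto.
  split. apply Derive_minus; auto.
  rewrite (Derive_ext (fun y => Derive (fun y => p t y - q t y) y) (fun y => Derive (fun y => p t y) y - Derive (fun y => q t y) y) x E). apply Derive_minus; auto.
Qed.

Record barrier (v vt vx vxx : R -> R -> R) : Prop := {
  b_t : forall t x, is_derive (fun s => v s x) t (vt t x);
  b_x : forall t x, is_derive (fun y => v t y) x (vx t x);
  b_xx : forall t x, is_derive (fun y => vx t y) x (vxx t x);
  b_c : forall t x, continuous (fun p : R * R => v (fst p) (snd p)) (t, x) }.

Lemma barrier_D v vt vx vxx t x : barrier v vt vx vxx ->
  ex_derive (fun s => v s x) t /\ (forall y, ex_derive (fun y => v t y) y) /\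
  ex_derive (fun y => Derive (fun y => v t y) y) x /\
  Derive (fun s => v s x) t = vt t x /\ Derive (fun y => Derive (fun y => v t y) y) x = vxx t x.
Proof.
  intros [Ht Hx Hxx _].
  assert (E : forall y, Derive (fun y => v t y) y = vx t y) by (intro y; apply is_derive_unique; apply Hx).
  split. eexists; apply Ht. split. intro y. eexists; apply Hx.
  split. eapply ex_derive_ext. intro y. symmetry. apply E. eexists; apply Hxx.
  split. apply is_derive_unique; apply Ht.
  rewrite (Derive_ext (fun y => Derive (fun y => v t y) y) (fun y => vx t y) x E). apply is_derive_unique; apply Hxx.
Qed.

Lemma heat_D g t0 t1 u t x : heat_sol g t0 t1 u -> t0 < t < t1 ->
  ex_derive (fun s => u s x) t /\ (forall y, ex_derive (fun y => u t y) y) /\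
  ex_derive (fun y => Derive (fun y => u t y) y) x /\
  Derive (fun s => u s x) t = Derive (fun y => Derive (fun y => u t y) y) x + g (u t x).
Proof.
  intros [_ [_ Hd]] Ht. destruct (Hd t x Ht) as [A [B [C [_ [_ E]]]]].
  split. exact A. split. intro y. apply (Hd t y Ht). split. exact C. exact E.
Qed.

Lemma compare_sub (u v vt vx vxx : R -> R -> R) g t0 T a b L :
  heat_sol g t0 T u -> t0 < T -> a < b -> 0 <= L -> barrier v vt vx vxx ->
  (forall t x, t0 < t < T -> a < x < b -> u t x < v t x ->
     vt t x - vxx t x - g (u t x) <= L * (v t x - u t x)) ->
  (forall x, a <= x <= b -> v t0 x <= u t0 x) ->
  (forall t, t0 <= t <= T -> v t a <= u t a /\ v t b <= u t b) ->
  forall t x, t0 <= t <= T -> a <= x <= b -> v t x <= u t x.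
Proof.
  intros Hu Ht Hab HL Hv Hineq Hi Hb t x Htt Hx.
  cut (v t x - u t x <= 0). lra.
  apply (maxp (fun t x => v t x - u t x) t0 T a b L Ht Hab HL).
  - apply jcont_sub. apply cont_jcont. apply (b_c _ _ _ _ Hv). eapply heat_jcont; eauto.
  - intros s y Hs Hy. destruct (barrier_D v vt vx vxx s y Hv) as [A1 [A2 [A3 _]]].
    destruct (heat_D g t0 T u s y Hu Hs) as [B1 [B2 [B3 _]]].
    destruct (dsub v u s y A1 B1 A2 B2 A3 B3) as [C1 [C2 [C3 _]]]. auto.
  - intros s y Hs Hy Hpos. destruct (barrier_D v vt vx vxx s y Hv) as [A1 [A2 [A3 [A4 A5]]]].
    destruct (heat_D g t0 T u s y Hu Hs) as [B1 [B2 [B3 B4]]].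
    destruct (dsub v u s y A1 B1 A2 B2 A3 B3) as [C1 [C2 [C3 [C4 C5]]]].
    rewrite C4, C5, A4, A5, B4. specialize (Hineq s y Hs Hy ltac:(lra)). lra.
  - intros y Hy. specialize (Hi y Hy). lra.
  - intros s Hs. destruct (Hb s Hs). lra.
  - exact Htt.
  - exact Hx.
Qed.

Lemma compare_super (u v vt vx vxx : R -> R -> R) g t0 T a b L :
  heat_sol g t0 T u -> t0 < T -> a < b -> 0 <= L -> barrier v vt vx vxx ->
  (forall t x, t0 < t < T -> a < x < b -> v t x < u t x ->
     g (u t x) - (vt t x - vxx t x) <= L * (u t x - v t x)) ->
  (forall x, a <= x <= b -> u t0 x <= v t0 x) ->
  (forall t, t0 <= t <= T -> u t a <= v t a /\ u t b <= v t b) ->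
  forall t x, t0 <= t <= T -> a <= x <= b -> u t x <= v t x.
Proof.
  intros Hu Ht Hab HL Hv Hineq Hi Hb t x Htt Hx.
  cut (u t x - v t x <= 0). lra.
  apply (maxp (fun t x => u t x - v t x) t0 T a b L Ht Hab HL).
  - apply jcont_sub. eapply heat_jcont; eauto. apply cont_jcont. apply (b_c _ _ _ _ Hv).
  - intros s y Hs Hy. destruct (barrier_D v vt vx vxx s y Hv) as [A1 [A2 [A3 _]]].
    destruct (heat_D g t0 T u s y Hu Hs) as [B1 [B2 [B3 _]]].
    destruct (dsub u v s y B1 A1 B2 A2 B3 A3) as [C1 [C2 [C3 _]]]. auto.
  - intros s y Hs Hy Hpos. destruct (barrier_D v vt vx vxx s y Hv) as [A1 [A2 [A3 [A4 A5]]]].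
    destruct (heat_D g t0 T u s y Hu Hs) as [B1 [B2 [B3 B4]]].
    destruct (dsub u v s y B1 A1 B2 A2 B3 A3) as [C1 [C2 [C3 [C4 C5]]]].
    rewrite C4, C5, A4, A5, B4. specialize (Hineq s y Hs Hy ltac:(lra)). lra.
  - intros y Hy. specialize (Hi y Hy). lra.
  - intros s Hs. destruct (Hb s Hs). lra.
  - exact Htt.
  - exact Hx.
Qed.

Lemma cR_plus (f g : R * R -> R) p : continuous f p -> continuous g p -> continuous (fun p => f p + g p) p.
Proof. intros. apply (continuous_plus f g p); auto. Qed.
Lemma cR_mult (f g : R * R -> R) p : continuous f p -> continuous g p -> continuous (fun p => f p * g p) p.
Proof. intros. apply (continuous_mult f g p); auto. Qed.
Lemma cR_minus (f g : R * R -> R) p : continuous f p -> continuous g p -> continuous (fun p => f p - g p) p.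
Proof. intros. apply (continuous_plus f (fun p => - g p) p); auto. apply (continuous_opp g p); auto. Qed.
Lemma cR_opp (g : R * R -> R) p : continuous g p -> continuous (fun p => - g p) p.
Proof. intros. apply (continuous_opp g p); auto. Qed.
Lemma cR_const (c : R) (p : R * R) : continuous (fun _ : R * R => c) p.
Proof. apply continuous_const. Qed.
Lemma cR_fst (p : R * R) : continuous (fun q : R * R => fst q) p.
Proof. destruct p. apply continuous_fst. Qed.
Lemma cR_snd (p : R * R) : continuous (fun q : R * R => snd q) p.
Proof. destruct p. apply continuous_snd. Qed.
Lemma cR_comp (f : R * R -> R) (h : R -> R) p : continuous f p -> ex_derive h (f p) -> continuous (fun p => h (f p)) p.
Proof. intros. apply (continuous_comp f h p); auto. apply (ex_derive_continuous h); auto. Qed.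

Ltac cont := repeat lazymatch goal with
  | |- continuous (fun p => _ - _) _ => apply cR_minus
  | |- continuous (fun p => _ + _) _ => apply cR_plus
  | |- continuous (fun p => _ * _) _ => apply cR_mult
  | |- continuous (fun p => - _) _ => apply cR_opp
  | |- continuous (fun p => fst p) _ => apply cR_fst
  | |- continuous fst _ => apply cR_fst
  | |- continuous snd _ => apply cR_snd
  | |- continuous (fun p => snd p) _ => apply cR_snd
  | |- continuous (fun p => exp _) _ => apply (cR_comp _ exp); [|auto_derive; auto]
  | |- continuous (fun p => _) _ => apply cR_const
  end.


Lemma chi_01 A x : 0 <= chi A x <= 1.
Proof. unfold chi. destruct (excluded_middle_informative (A x)); lra. Qed.
Lemma chi_in (A : R -> Prop) x : A x -> chi A x = 1.
Proof. intro H. unfold chi. destruct (excluded_middle_informative (A x)); tauto. Qed.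
Lemma chi_out (A : R -> Prop) x : ~ A x -> chi A x = 0.
Proof. intro H. unfold chi. destruct (excluded_middle_informative (A x)); tauto. Qed.

Lemma g0_low v : v <= 1/2 -> g0 v = 0.
Proof. intro H. unfold g0. destruct (Rle_dec v (1/2)); [reflexivity| lra]. Qed.

Definition bq (al be t0 : R) (t x : R) := al - be * (x * x) - 2 * be * (t - t0).

Lemma bq_barrier al be t0 :
  barrier (bq al be t0) (fun _ _ => - 2 * be) (fun _ x => - 2 * be * x) (fun _ _ => - 2 * be).
Proof.
  split; intros t x; unfold bq.
  - auto_derive; auto. ring.
  - auto_derive; auto. ring.
  - auto_derive; auto. ring.
  - cont.
Qed.

Lemma part3 (M : R) : 6 < M -> forall u : R -> R -> R, heat_sol g0 (-1) 2 u ->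
     (forall x, u (-1) x >= 4/11 * chi (fun y => - M < y < M) x) ->
     forall x, Rmin (u 0 x) (u 2 x) >= 3/11 * chi (fun y => -1 < y < 1) x.
Proof.
  intros HM u Hu Hi x.
  assert (Hr : forall t, -1 <= t <= 2 -> forall y, 0 <= u t y <= 1) by (intros; apply (proj1 Hu); auto).
  assert (C := compare_sub u (bq (4/11) (1/77) (-1)) _ _ _ g0 (-1) 2 (-6) 6 0 Hu
            ltac:(lra) ltac:(lra) ltac:(lra) (bq_barrier _ _ _)).
  assert (K : forall t y, -1 <= t <= 2 -> -6 <= y <= 6 -> bq (4/11) (1/77) (-1) t y <= u t y).
  { apply C.
    - intros t y Ht Hy Hlt. rewrite g0_low. lra. unfold bq in Hlt. nra.
    - intros y Hy. specialize (Hi y). rewrite chi_in in Hi by lra. unfold bq. nra.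
    - intros t Ht. unfold bq. assert (0 <= u t (-6)) by (apply Hr; lra). assert (0 <= u t 6) by (apply Hr; lra). split; nra. }
  destruct (Rlt_dec (-1) x) as [h1|h1]; [destruct (Rlt_dec x 1) as [h2|h2]|].
  - rewrite chi_in by lra.
    assert (K0 := K 0 x ltac:(lra) ltac:(lra)). assert (K2 := K 2 x ltac:(lra) ltac:(lra)).
    unfold bq in K0, K2.
    assert (x * x <= 1) by nra.
    apply Rle_ge. apply Rmin_glb; nra.
  - rewrite chi_out by lra. apply Rle_ge. apply Rmin_glb. rewrite Rmult_0_r; apply Hr; lra. rewrite Rmult_0_r; apply Hr; lra.
  - rewrite chi_out by lra. apply Rle_ge. apply Rmin_glb. rewrite Rmult_0_r; apply Hr; lra. rewrite Rmult_0_r; apply Hr; lra.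
Qed.

Definition be (c0 bt B t0 x0 : R) (t x : R) :=
  c0 - bt * (t - t0) + B * exp (2 * (t - t0)) * (exp (x - x0) + exp (x0 - x)).

Lemma be_barrier c0 bt B t0 x0 :
  barrier (be c0 bt B t0 x0)
    (fun t x => - bt + 2 * (B * exp (2 * (t - t0)) * (exp (x - x0) + exp (x0 - x))))
    (fun t x => B * exp (2 * (t - t0)) * (exp (x - x0) - exp (x0 - x)))
    (fun t x => B * exp (2 * (t - t0)) * (exp (x - x0) + exp (x0 - x))).
Proof.
  split; intros t x; unfold be.
  - auto_derive; auto. unfold Rminus; ring.
  - auto_derive; auto. unfold Rminus; ring.
  - auto_derive; auto. unfold Rminus; ring.
  - cont.
Qed.

Lemma exp3 : 4 <= exp 3.
Proof. assert (H := exp_ineq1_le 3). lra. Qed.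

Lemma exp_big : 8000 <= exp 30.
Proof.
  assert (E : exp 30 = (exp 3) ^ 10).
  { simpl. rewrite Rmult_1_r. rewrite <- !exp_plus. f_equal. ring. }
  rewrite E. assert (H4 : 0 <= 4 <= exp 3) by (split; [lra| apply exp3]). assert (H := pow_incr 4 (exp 3) 10 H4).
  replace (4 ^ 10) with 1048576 in H by ring. lra.
Qed.

Lemma B_bound (B x0 y : R) : B = exp (-40) -> Rabs (y - x0) = 40 -> 1 <= B * (exp (y - x0) + exp (x0 - y)).
Proof.
  intros HB Hy. subst B.
  assert (0 < exp (y - x0)) by apply exp_pos. assert (0 < exp (x0 - y)) by apply exp_pos.
  assert (E : exp (-40) * exp 40 = 1) by (rewrite <- exp_plus; replace (-40 + 40) with 0 by ring; apply exp_0).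
  assert (0 < exp (-40)) by apply exp_pos.
  destruct (Rle_dec 0 (y - x0)).
  - rewrite Rabs_right in Hy by lra. replace (y - x0) with 40 by lra. nra.
  - rewrite Rabs_left in Hy by lra. replace (x0 - y) with 40 by lra. nra.
Qed.

Lemma center_small (T : R) : 0 <= T <= 3 -> exp (-40) * exp (2 * T) * (exp 0 + exp 0) <= 1 / 4000.
Proof.
  intro HT. rewrite exp_0.
  assert (exp (-40) * exp (2 * T) <= exp (-30)).
  { rewrite <- exp_plus. destruct (Req_dec (-40 + 2 * T) (-30)). rewrite H; lra. left. apply exp_increasing. lra. }
  assert (exp (-30) * exp 30 = 1) by (rewrite <- exp_plus; replace (-30 + 30) with 0 by ring; apply exp_0).
  assert (H1 := exp_big). assert (0 < exp (-30)) by apply exp_pos. nra.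
Qed.

Lemma cubic_lip u p : 1/2 <= p <= u -> u <= 1 ->
  (u - 1/2) * (1 - u) * (u - 2/3) - (p - 1/2) * (1 - p) * (p - 2/3) <= u - p.
Proof.
  intros Hp Hu.
  replace ((u - 1/2) * (1 - u) * (u - 2/3) - (p - 1/2) * (1 - p) * (p - 2/3))
    with (- (u - p) * (u * u + u * p + p * p - 13/6 * (u + p) + 3/2)) by field.
  assert (u * u + u * p + p * p - 13/6 * (u + p) + 3/2 >= -1) by nra.
  nra.
Qed.

Lemma part1 : forall u : R -> R -> R, heat_sol g0 0 1 u ->
     (forall x, u 0 x <= chi (fun y => y <= 0) x + 5/8 * chi (fun y => 0 < y) x) ->
     forall x, u 1 x <= chi (fun y => y <= 40) x + (5/8 - 2 * (1/4000)) * chi (fun y => 40 < y) x.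
Proof.
  intros u Hu Hi x0.
  assert (Hr : forall t, 0 <= t <= 1 -> forall y, 0 <= u t y <= 1) by (intros; apply (proj1 Hu); auto).
  destruct (Rle_dec x0 40) as [h|h].
  - rewrite chi_in by lra. rewrite chi_out by lra. assert (H := Hr 1 ltac:(lra) x0). lra.
  - rewrite chi_out by lra. rewrite chi_in by lra.
    set (B := exp (-40)).
    assert (C := compare_super u (be (5/8) (1/1000) B 0 x0) _ _ _ g0 0 1 (x0 - 40) (x0 + 40) 1 Hu
              ltac:(lra) ltac:(lra) ltac:(lra) (be_barrier _ _ _ _ _)).
    assert (HBp : 0 < B) by apply exp_pos.
    assert (K : forall t y, 0 <= t <= 1 -> x0 - 40 <= y <= x0 + 40 -> u t y <= be (5/8) (1/1000) B 0 x0 t y).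
    { apply C.
      - intros t y Ht Hy Hlt. unfold be in *.
        set (phi := B * exp (2 * (t - 0)) * (exp (y - x0) + exp (x0 - y))) in *.
        assert (0 <= phi). { unfold phi. apply Rmult_le_pos. apply Rmult_le_pos; [lra| left; apply exp_pos].
          left; apply Rplus_lt_0_compat; apply exp_pos. }
        assert (Hut := Hr t ltac:(lra) y).
        unfold g0. destruct (Rle_dec (u t y) (1/2)). lra.
        set (p := 5/8 - 1/1000 * (t - 0)).
        assert (Q := cubic_lip (u t y) p ltac:(unfold p; lra) ltac:(lra)).
        assert ((p - 1/2) * (1 - p) * (p - 2/3) <= - (1/1000)).
        { unfold p. assert (0 < t < 1) by lra. nra. }
        lra.
      - intros y Hy. unfold be. specialize (Hi y). rewrite chi_out in Hi by lra. rewrite chi_in in Hi by lra.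
        assert (0 <= B * exp (2 * (0 - 0)) * (exp (y - x0) + exp (x0 - y))).
        { apply Rmult_le_pos. apply Rmult_le_pos; [lra| left; apply exp_pos].
          left; apply Rplus_lt_0_compat; apply exp_pos. }
        lra.
      - intros t Ht. unfold be.
        assert (E1 : 1 <= exp (2 * (t - 0))) by (rewrite <- exp_0; destruct (Req_dec t 0); [subst; rewrite Rminus_0_r, Rmult_0_r; lra| left; apply exp_increasing; lra]).
        assert (F1 := B_bound B x0 (x0 - 40) eq_refl ltac:(rewrite Rabs_left; lra)).
        assert (F2 := B_bound B x0 (x0 + 40) eq_refl ltac:(rewrite Rabs_right; lra)).
        assert (0 < exp (x0 - 40 - x0) + exp (x0 - (x0 - 40))) by (apply Rplus_lt_0_compat; apply exp_pos).
        assert (0 < exp (x0 + 40 - x0) + exp (x0 - (x0 + 40))) by (apply Rplus_lt_0_compat; apply exp_pos).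
        assert (G1 := Hr t Ht (x0 - 40)). assert (G2 := Hr t Ht (x0 + 40)).
        split; nra. }
    assert (K1 := K 1 x0 ltac:(lra) ltac:(lra)). unfold be in K1.
    rewrite Rminus_eq_0 in K1. assert (Cs := center_small 1 ltac:(lra)). unfold B in K1.
    replace (1 - 0) with 1 in K1 by ring. lra.
Qed.

Lemma g1_high K v c0 : 1/2 <= c0 <= 2/3 -> c0 <= v <= 1 -> g1 K v <= v - c0.
Proof.
  intros Hc Hv. unfold g1.
  destruct (Rle_dec v (1/11)). lra.
  destruct (Rlt_dec v (1/2)). lra.
  destruct (Rle_dec v (2/3)). lra.
  assert ((v - 1/2) * (1 - v) <= 1/2 * (1/3)) by nra. nra.
Qed.

Lemma part2 : forall K : R, 0 <= K -> forall u : R -> R -> R, heat_sol (g1 K) 1 4 u ->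
     (forall x, u 1 x <= chi (fun y => y <= 40) x + (5/8 - 2 * (1/4000)) * chi (fun y => 40 < y) x) ->
     forall x, u 4 x <= chi (fun y => y <= 2 * 40) x + (5/8 - (1/4000)) * chi (fun y => 2 * 40 < y) x.
Proof.
  intros K HK u Hu Hi x0.
  assert (Hr : forall t, 1 <= t <= 4 -> forall y, 0 <= u t y <= 1) by (intros; apply (proj1 Hu); auto).
  destruct (Rle_dec x0 (2 * 40)) as [h|h].
  - rewrite chi_in by lra. rewrite chi_out by lra. assert (H := Hr 4 ltac:(lra) x0). lra.
  - rewrite chi_out by lra. rewrite chi_in by lra.
    set (B := exp (-40)).
    set (c0 := 5/8 - 2 * (1/4000)).
    assert (C := compare_super u (be c0 0 B 1 x0) _ _ _ (g1 K) 1 4 (x0 - 40) (x0 + 40) 1 Hu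
              ltac:(lra) ltac:(lra) ltac:(lra) (be_barrier _ _ _ _ _)).
    assert (HBp : 0 < B) by apply exp_pos.
    assert (K' : forall t y, 1 <= t <= 4 -> x0 - 40 <= y <= x0 + 40 -> u t y <= be c0 0 B 1 x0 t y).
    { apply C.
      - intros t y Ht Hy Hlt. unfold be in *.
        set (phi := B * exp (2 * (t - 1)) * (exp (y - x0) + exp (x0 - y))) in *.
        assert (0 <= phi). { unfold phi. apply Rmult_le_pos. apply Rmult_le_pos; [lra| left; apply exp_pos].
          left; apply Rplus_lt_0_compat; apply exp_pos. }
        assert (Hut := Hr t ltac:(lra) y).
        assert (Q := g1_high K (u t y) c0 ltac:(unfold c0; lra) ltac:(unfold c0 in *; lra)).
        lra.
      - intros y Hy. unfold be. specialize (Hi y). rewrite chi_out in Hi by lra. rewrite chi_in in Hi by lra.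
        assert (0 <= B * exp (2 * (1 - 1)) * (exp (y - x0) + exp (x0 - y))).
        { apply Rmult_le_pos. apply Rmult_le_pos; [lra| left; apply exp_pos].
          left; apply Rplus_lt_0_compat; apply exp_pos. }
        unfold c0. lra.
      - intros t Ht. unfold be.
        assert (E1 : 1 <= exp (2 * (t - 1))) by (assert (Q := exp_ineq1_le (2 * (t - 1))); lra).
        assert (F1 := B_bound B x0 (x0 - 40) eq_refl ltac:(rewrite Rabs_left; lra)).
        assert (F2 := B_bound B x0 (x0 + 40) eq_refl ltac:(rewrite Rabs_right; lra)).
        assert (0 < exp (x0 - 40 - x0) + exp (x0 - (x0 - 40))) by (apply Rplus_lt_0_compat; apply exp_pos).
        assert (0 < exp (x0 + 40 - x0) + exp (x0 - (x0 + 40))) by (apply Rplus_lt_0_compat; apply exp_pos).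
        assert (G1 := Hr t Ht (x0 - 40)). assert (G2 := Hr t Ht (x0 + 40)).
        unfold c0. split; nra. }
    assert (K1 := K' 4 x0 ltac:(lra) ltac:(lra)). unfold be in K1.
    rewrite Rminus_eq_0 in K1. assert (Cs := center_small 3 ltac:(lra)). unfold B in K1.
    replace (4 - 1) with 3 in K1 by ring. unfold c0 in K1. lra.
Qed.

Definition Sf y := exp y + exp (- y).
Definition Wf y := 2 / Sf y.
Definition Wd y := -2 * (exp y - exp (- y)) / (Sf y) ^ 2.
Definition Wdd y := -2 * ((Sf y) ^ 2 - 2 * (exp y - exp (- y)) ^ 2) / (Sf y) ^ 3.

Lemma EF y : exp y * exp (- y) = 1.
Proof. rewrite <- exp_plus. replace (y + - y) with 0 by ring. apply exp_0. Qed.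

Lemma Sf_ge2 y : 2 <= Sf y.
Proof. unfold Sf. assert (H := EF y). assert (0 < exp y) by apply exp_pos. assert (0 < exp (-y)) by apply exp_pos.
  assert (Q : (exp y + exp (- y)) * (exp y + exp (- y)) >= 4) by (assert (0 <= (exp y - exp (-y)) * (exp y - exp (-y))) by apply Rle_0_sqr; nra).
  destruct (Rle_or_lt 2 (exp y + exp (-y))) as [h|h]. exact h. nra. Qed.

Lemma Wf_deriv y : is_derive Wf y (Wd y).
Proof.
  unfold Wf, Wd, Sf. assert (H := Sf_ge2 y). unfold Sf in H.
  auto_derive. lra. field. lra.
Qed.

Lemma Wd_deriv y : is_derive Wd y (Wdd y).
Proof.
  unfold Wdd, Wd, Sf. assert (H := Sf_ge2 y). unfold Sf in H.
  assert (Hn : exp y + exp (- y) <> 0) by lra. auto_derive. rewrite Rmult_1_r. apply Rmult_integral_contrapositive; split; exact Hn. field. exact Hn.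
Qed.

Lemma Wf_bounds y : 0 < Wf y <= 1.
Proof. unfold Wf. assert (H := Sf_ge2 y). split. apply Rdiv_lt_0_compat; lra.
  apply (Rmult_le_reg_r (Sf y)). lra. field_simplify; lra. Qed.

Lemma Wd_bound y : Rabs (Wd y) <= Wf y.
Proof.
  unfold Wd, Wf. assert (H := Sf_ge2 y). assert (0 < exp y) by apply exp_pos. assert (0 < exp (-y)) by apply exp_pos.
  assert (Rabs (exp y - exp (- y)) <= Sf y) by (unfold Sf; apply Rabs_le; lra).
  replace (-2 * (exp y - exp (- y)) / Sf y ^ 2) with (- (2 / Sf y ^ 2) * (exp y - exp (- y))) by (field; lra).
  rewrite Rabs_mult, Rabs_Ropp, Rabs_right. 2: apply Rle_ge, Rlt_le, Rdiv_lt_0_compat; [lra | apply pow_lt; lra].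
  replace (2 / Sf y) with (2 / Sf y ^ 2 * Sf y) by (field; lra).
  apply Rmult_le_compat_l. left; apply Rdiv_lt_0_compat; [lra | apply pow_lt; lra]. exact H2.
Qed.

Lemma Wdd_eq y : Wdd y = Wf y * (1 - 2 * (Wf y) ^ 2).
Proof.
  unfold Wdd, Wf. assert (H := Sf_ge2 y).
  assert (E : (exp y - exp (- y)) ^ 2 = (Sf y) ^ 2 - 4) by (unfold Sf; assert (Q := EF y); nra).
  rewrite E. field. lra.
Qed.

Lemma Wf_far y : 16 <= Rabs y -> Wf y <= 2 / 17.
Proof.
  intro Hy. unfold Wf. assert (H := Sf_ge2 y).
  assert (17 <= Sf y).
  { unfold Sf. assert (0 < exp y) by apply exp_pos. assert (0 < exp (-y)) by apply exp_pos.
    destruct (Rle_dec 0 y).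
    - rewrite Rabs_right in Hy by lra. assert (Q := exp_ineq1_le y). lra.
    - rewrite Rabs_left in Hy by lra. assert (Q := exp_ineq1_le (- y)). lra. }
  apply (Rmult_le_reg_r (Sf y)). lra. unfold Rdiv. rewrite Rmult_assoc, Rinv_l by lra. nra.
Qed.

Lemma Wf0 : Wf 0 = 1.
Proof. unfold Wf, Sf. rewrite Ropp_0, exp_0. field. Qed.

Definition Pt t := 8/33 + 9/33 * (t - 2).
Definition xi (C x0 t x : R) := C * (x - x0 * (t - 2)).
Definition vb (C x0 : R) (t x : R) := Pt t * Wf (xi C x0 t x) - 2/33.

Lemma vb_barrier C x0 : barrier (vb C x0)
  (fun t x => 9/33 * Wf (xi C x0 t x) + Pt t * (Wd (xi C x0 t x) * (- (C * x0))))
  (fun t x => Pt t * (Wd (xi C x0 t x) * C))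
  (fun t x => Pt t * (Wdd (xi C x0 t x) * C * C)).
Proof.
  split; intros t x.
  - assert (H := Sf_ge2 (xi C x0 t x)). unfold vb, Pt, Wf, Wd, Sf in *. unfold xi in *. unfold Rminus in *.
    auto_derive. lra. field. lra.
  - assert (H := Sf_ge2 (xi C x0 t x)). unfold vb, Pt, Wf, Wd, Sf in *. unfold xi in *. unfold Rminus in *.
    auto_derive. lra. field. lra.
  - assert (H := Sf_ge2 (xi C x0 t x)). unfold vb, Pt, Wdd, Wd, Sf in *. unfold xi in *. unfold Rminus in *.
    auto_derive. rewrite Rmult_1_r. apply Rmult_integral_contrapositive_currified; lra. field. lra.
  - unfold vb, Pt, xi.
    repeat lazymatch goal with
    | |- continuous (fun p => _ - _) _ => apply cR_minus
    | |- continuous (fun p => _ + _) _ => apply cR_plus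
    | |- continuous (fun p => _ * _) _ => apply cR_mult
    | |- continuous (fun p => - _) _ => apply cR_opp
    | |- continuous (fun p => fst p) _ => apply cR_fst
    | |- continuous (fun p => snd p) _ => apply cR_snd
    | |- continuous fst _ => apply cR_fst
    | |- continuous snd _ => apply cR_snd
    | |- continuous (fun p => Wf _) _ => apply (cR_comp _ Wf); [| eexists; apply Wf_deriv]
    | |- continuous (fun p => _) _ => apply cR_const
    end.
Qed.

Lemma g1_nonneg K v : 0 <= K -> v <= 2/3 -> 0 <= g1 K v.
Proof.
  intros HK Hv. unfold g1.
  destruct (Rle_dec v (1/11)). lra.
  destruct (Rlt_dec v (1/2)).
  - apply Rmult_le_pos. lra. apply Rmin_glb; apply Rabs_pos.
  - destruct (Rle_dec v (2/3)). lra. lra.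
Qed.

Lemma g1_mid K v : 1/11 < v < 1/2 -> g1 K v = K * Rmin (v - 1/11) (1/2 - v).
Proof.
  intros Hv. unfold g1.
  destruct (Rle_dec v (1/11)). lra.
  destruct (Rlt_dec v (1/2)). 2: lra.
  rewrite Rabs_right by lra. rewrite Rabs_left by lra. f_equal. f_equal. ring.
Qed.

Lemma g1_lip K u v : 0 <= K -> 0 <= u -> u < v -> v < 1/2 -> g1 K v - g1 K u <= K * (v - u).
Proof.
  intros HK Hu Huv Hv.
  assert (F : forall y, 0 <= y < 1/2 -> g1 K y = K * (if Rle_dec y (1/11) then 0 else Rmin (y - 1/11) (1/2 - y))).
  { intros y Hy. destruct (Rle_dec y (1/11)). unfold g1. destruct (Rle_dec y (1/11)). ring. lra.
    apply g1_mid. lra. }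
  rewrite (F v) by lra. rewrite (F u) by lra.
  rewrite <- Rmult_minus_distr_l. apply Rmult_le_compat_l. exact HK.
  destruct (Rle_dec v (1/11)); destruct (Rle_dec u (1/11)); try lra.
  - assert (Rmin (v - 1/11) (1/2 - v) <= v - 1/11) by apply Rmin_l. lra.
  - unfold Rmin. destruct (Rle_dec (v - 1/11) (1/2 - v)); destruct (Rle_dec (u - 1/11) (1/2 - u)); lra.
Qed.

Lemma ineq_core (w d P x0 K : R) : 0 < w <= 1 -> Rabs d <= w -> 8/33 <= P <= 17/33 ->
  Rabs x0 <= 160 -> 300000000 <= K ->
  9/33 * w + P * (d * (- (1500 * x0))) - P * (w * (1 - 2 * w ^ 2) * 1500 * 1500) <= g1 K (P * w - 2/33).
Proof.
  intros Hw Hd HP Hx HK.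
  assert (A1 : d * (- (1500 * x0)) <= 240000 * w).
  { eapply Rle_trans. apply Rle_abs. rewrite Rabs_mult, Rabs_Ropp, Rabs_mult, (Rabs_right 1500) by lra.
    assert (0 <= Rabs d) by apply Rabs_pos. assert (0 <= Rabs x0) by apply Rabs_pos. nra. }
  assert (A2 : P * (d * (- (1500 * x0))) <= 240000 * P * w) by nra.
  destruct (Rle_dec w (2/3)).
  - assert (1/9 <= 1 - 2 * w ^ 2) by nra.
    assert (P * (w * (1 - 2 * w ^ 2) * 1500 * 1500) >= 250000 * P * w).
    { assert (0 <= P * w) by nra.
      replace (P * (w * (1 - 2 * w ^ 2) * 1500 * 1500)) with ((P * w) * (2250000 * (1 - 2 * w ^ 2))) by ring.
      replace (250000 * P * w) with ((P * w) * 250000) by ring.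
      apply Rle_ge. apply Rmult_le_compat_l. lra. lra. }
    assert (0 <= g1 K (P * w - 2/33)) by (apply g1_nonneg; nra). nra.
  - assert (Pw1 : 16/99 <= P * w) by nra. assert (Pw2 : P * w <= 17/33) by nra.
    rewrite g1_mid by lra.
    assert (K / 99 <= K * Rmin (P * w - 2 / 33 - 1 / 11) (1 / 2 - (P * w - 2 / 33))).
    { replace (K / 99) with (K * (1/99)) by field. apply Rmult_le_compat_l. lra.
      apply Rmin_glb; lra. }
    assert (-1 <= 1 - 2 * w ^ 2 <= 1) by nra.
    assert (P * (w * (1 - 2 * w ^ 2) * 1500 * 1500) >= - 2250000 * P).
    { assert (0 <= P) by lra. assert (-1 <= w * (1 - 2 * w ^ 2)) by nra.
      replace (P * (w * (1 - 2 * w ^ 2) * 1500 * 1500)) with (P * (2250000 * (w * (1 - 2 * w ^ 2)))) by ring.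
      nra. }
    nra.
Qed.

Lemma part4 : exists K0 : R, forall K : R, K0 <= K -> forall u : R -> R -> R, heat_sol (g1 K) 2 3 u ->
     (forall x, u 2 x >= 2/11 * chi (fun y => -1 < y < 1) x) ->
     forall x, u 3 x >= 5/11 * chi (fun y => - (4 * 40) < y < 4 * 40) x.
Proof.
  exists 300000000. intros K HK u Hu Hi x0.
  assert (Hr : forall t, 2 <= t <= 3 -> forall y, 0 <= u t y <= 1) by (intros; apply (proj1 Hu); auto).
  destruct (Rlt_dec (- (4 * 40)) x0) as [h1|h1]; [destruct (Rlt_dec x0 (4 * 40)) as [h2|h2]|].
  2,3: rewrite chi_out by lra; assert (Q := Hr 3 ltac:(lra) x0); lra.
  rewrite chi_in by lra.
  assert (Hx0 : Rabs x0 <= 160) by (apply Rabs_le; lra).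
  assert (C := compare_sub u (vb 1500 x0) _ _ _ (g1 K) 2 3 (-200) 200 K Hu
              ltac:(lra) ltac:(lra) ltac:(lra) (vb_barrier _ _)).
  assert (Pb : forall t, 2 <= t <= 3 -> 8/33 <= Pt t <= 17/33) by (intros t Ht; unfold Pt; lra).
  assert (Far : forall t y, 2 <= t <= 3 -> 16 <= Rabs (xi 1500 x0 t y) -> vb 1500 x0 t y <= 0).
  { intros t y Ht Hy. unfold vb. assert (W := Wf_far _ Hy). assert (W2 := Wf_bounds (xi 1500 x0 t y)).
    assert (P := Pb t Ht). nra. }
  assert (Kc : forall t y, 2 <= t <= 3 -> -200 <= y <= 200 -> vb 1500 x0 t y <= u t y).
  { apply C.
    - intros t y Ht Hy Hlt. simpl.
      assert (W := Wf_bounds (xi 1500 x0 t y)). assert (D := Wd_bound (xi 1500 x0 t y)).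
      assert (P := Pb t ltac:(lra)).
      assert (I := ineq_core (Wf (xi 1500 x0 t y)) (Wd (xi 1500 x0 t y)) (Pt t) x0 K W D P Hx0 HK).
      rewrite Wdd_eq.
      assert (Hut := Hr t ltac:(lra) y).
      assert (L := g1_lip K (u t y) (vb 1500 x0 t y) ltac:(lra) ltac:(lra) Hlt ltac:(unfold vb; nra)).
      unfold vb in L, I |- *. lra.
    - intros y Hy. destruct (Rlt_dec (Rabs y) 1).
      + specialize (Hi y). apply Rabs_def2 in r. rewrite chi_in in Hi by lra.
        unfold vb. assert (W := Wf_bounds (xi 1500 x0 2 y)). unfold Pt. lra.
      + assert (Q := Hr 2 ltac:(lra) y). assert (vb 1500 x0 2 y <= 0).
        { apply Far. lra. unfold xi. replace (y - x0 * (2 - 2)) with y by ring. rewrite Rabs_mult, (Rabs_right 1500) by lra. lra. }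
        lra.
    - intros t Ht. split.
      + assert (Q := Hr t Ht (-200)). assert (vb 1500 x0 t (-200) <= 0).
        { apply Far. lra. unfold xi. rewrite Rabs_mult, (Rabs_right 1500) by lra.
          assert (40 <= Rabs (-200 - x0 * (t - 2))). { rewrite Rabs_left. nra. nra. } lra. }
        lra.
      + assert (Q := Hr t Ht 200). assert (vb 1500 x0 t 200 <= 0).
        { apply Far. lra. unfold xi. rewrite Rabs_mult, (Rabs_right 1500) by lra.
          assert (40 <= Rabs (200 - x0 * (t - 2))). { rewrite Rabs_right. nra. nra. } lra. }
        lra. }
  assert (Q := Kc 3 x0 ltac:(lra) ltac:(lra)). unfold vb in Q.
  replace (xi 1500 x0 3 x0) with 0 in Q by (unfold xi; ring). rewrite Wf0 in Q. unfold Pt in Q. lra.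
Qed.


Theorem lemma7p1 :
  exists M a : R, 0 < M /\ 0 < a < 1/16 /\
  (* (i) *)
  (forall u : R -> R -> R, heat_sol g0 0 1 u ->
     (forall x, u 0 x <= chi (fun y => y <= 0) x + 5/8 * chi (fun y => 0 < y) x) ->
     forall x, u 1 x <= chi (fun y => y <= M) x + (5/8 - 2 * a) * chi (fun y => M < y) x) /\
  (* (ii) *)
  (forall K : R, 0 <= K -> forall u : R -> R -> R, heat_sol (g1 K) 1 4 u ->
     (forall x, u 1 x <= chi (fun y => y <= M) x + (5/8 - 2 * a) * chi (fun y => M < y) x) ->
     forall x, u 4 x <= chi (fun y => y <= 2 * M) x + (5/8 - a) * chi (fun y => 2 * M < y) x) /\
  (* (iii) *)
  (forall u : R -> R -> R, heat_sol g0 (-1) 2 u ->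
     (forall x, u (-1) x >= 4/11 * chi (fun y => - M < y < M) x) ->
     forall x, Rmin (u 0 x) (u 2 x) >= 3/11 * chi (fun y => -1 < y < 1) x) /\
  (* (iv) *)
  (exists K0 : R, forall K : R, K0 <= K -> forall u : R -> R -> R, heat_sol (g1 K) 2 3 u ->
     (forall x, u 2 x >= 2/11 * chi (fun y => -1 < y < 1) x) ->
     forall x, u 3 x >= 5/11 * chi (fun y => - (4 * M) < y < 4 * M) x).
Proof.
  exists 40, (1/4000).
  split. lra. split. lra.
  split. exact part1.
  split. exact part2.
  split. apply part3. lra.
  exact part4.
Qed.
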